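(* Let $\emptyset\neq S\subseteq\mathbb{S}$. The following assertions are equivalent: (i) $S$ is closed and s-convex; (ii) $\mathbb{R}_+S$ is a pointed, closed, convex cone; (iii) there exists a pointed, closed, convex cone $K\subseteq\mathbb{R}^n$ such that $S=K\cap\mathbb{S}$; (iv) $S=\rho(\overline{\operatorname{conv}}\,S)$; (v) there exists a compact convex set $C\subseteq\mathbb{R}^n$ such that $S=\rho(C)$.
   Context: Standing setting: $n\ge 2$; $\mathbb{R}^n$ carries the usual inner product $\langle\cdot,\cdot\rangle$ and Euclidean norm; $o$ denotes the zero vector. $\Phi:\mathbb{R}^n\to\mathbb{R}_+:=[0,\infty)$ is a continuous function with $\Phi(tx)=t\Phi(x)$ for all $x\in\mathbb{R}^n$, $t\ge 0$, and $\Phi(x)=0$ iff $x=o$. Set $\mathbb{S}:=\{x\in\mathbb{R}^n\mid \Phi(x)=1\}$ (with the topology induced from $\mathbb{R}^n$), $\mathbb{P}:=(0,\infty)$, and $\rho:\mathbb{R}^n\to\{o\}\cup\mathbb{S}$, $\rho(x):=x/\Phi(x)$ for $x\neq o$, $\rho(o):=o$. For $\emptyset\ne\Gamma\subseteq\mathbb{R}$ and $\emptyset\ne A\subseteq\mathbb{R}^n$, $\Gamma A:=\{\gamma a\mid \gamma\in\Gamma,\ a\in A\}$. For $x,y\in\mathbb{S}$ and $\lambda\in[0,1]$, $\lambda x+_s(1-\lambda)y:=\rho(\lambda x+(1-\lambda)y)$. A nonempty set $S\subseteq\mathbb{S}$ is called s-convex if $\lambda x+_s(1-\lambda)y\in S$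 for all $x,y\in S$ and $\lambda\in[0,1]$. A cone $K\subseteq\mathbb{R}^n$ is pointed if $K\cap(-K)=\{o\}$. $\operatorname{conv}$ denotes the convex hull and $\overline{\operatorname{conv}}$ the closed convex hull. *)

(* Defs.v *)
(* R^n is rendered as 'rV[R]_n with its canonical
   (product) topology, which coincides with the Euclidean topology. *)
From HB Require Import structures.
From mathcomp Require Import all_boot all_order all_algebra.
From mathcomp Require Import all_classical all_reals all_analysis.
Set Implicit Arguments. Unset Strict Implicit. Unset Printing Implicit Defensive.
Import Order.TTheory GRing.Theory Num.Theory.
Import numFieldNormedType.Exports.
Local Open Scope classical_set_scope.
Local Open Scope ring_scope.

Section Defs.
Context {R : realType} {n : nat}.
Local Notation V := 'rV[R]_n.

Definition admissible_Phi (Phi : V -> R) : Prop :=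
  continuous Phi /\
  (forall x, 0 <= Phi x) /\
  (forall (t : R) (x : V), 0 <= t -> Phi (t *: x) = t * Phi x) /\
  (forall x, Phi x = 0 <-> x = 0).

Definition sph (Phi : V -> R) : set V := [set x | Phi x = 1].

Definition rho (Phi : V -> R) (x : V) : V :=
  if x == 0 then 0 else (Phi x)^-1 *: x.

Definition s_convex (Phi : V -> R) (S : set V) : Prop :=
  S !=set0 /\ S `<=` sph Phi /\
  forall x y (l : R), S x -> S y -> 0 <= l <= 1 ->
    S (rho Phi (l *: x + (1 - l) *: y)).

Definition closed_in_sph (Phi : V -> R) (S : set V) : Prop :=
  exists F : set V, closed F /\ S = sph Phi `&` F.

Definition convex (A : set V) : Prop :=
  forall x y (l : R), A x -> A y -> 0 <= l <= 1 -> A (l *: x + (1 - l) *: y).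

Definition cone (K : set V) : Prop :=
  forall (t : R) x, 0 < t -> K x -> K (t *: x).

Definition pointed (K : set V) : Prop :=
  K `&` [set - x | x in K] = [set 0].

Definition scale_set (G : set R) (A : set V) : set V :=
  [set g *: a | g in G & a in A].

Definition conv (A : set V) : set V :=
  \bigcap_(C in [set C | convex C /\ A `<=` C]) C.

Definition cl_conv (A : set V) : set V := closure (conv A).

End Defs.

(* Main.v *)
Require Import Defs.
From HB Require Import structures.
From mathcomp Require Import all_boot all_order all_algebra.
From mathcomp Require Import all_classical all_reals all_analysis.
Import Order.TTheory GRing.Theory Num.Theory.
Import numFieldNormedType.Exports.
Local Open Scope classical_set_scope.
Local Open Scope ring_scope.
Set Implicit Arguments. Unset Strict Implicit.
Lemma Phi0 (R : realType) (n : nat) (Phi : 'rV[R]_n -> R) :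
  admissible_Phi Phi -> Phi 0 = 0.
Proof. by case=> _ [_ [_ h]]; apply/h. Qed.

Lemma Phi_gt0 (R : realType) (n : nat) (Phi : 'rV[R]_n -> R) x :
  admissible_Phi Phi -> x != 0 -> 0 < Phi x.
Proof.
case=> _ [h0 [_ h]] x0; rewrite lt_neqAle h0 andbT eq_sym.
by apply/eqP => /h /eqP; rewrite (negbTE x0).
Qed.

Lemma PhiZ (R : realType) (n : nat) (Phi : 'rV[R]_n -> R) t x :
  admissible_Phi Phi -> 0 <= t -> Phi (t *: x) = t * Phi x.
Proof. by case=> _ [_ [h _]]; apply: h. Qed.

Lemma sph_neq0 (R : realType) (n : nat) (Phi : 'rV[R]_n -> R) x :
  admissible_Phi Phi -> Phi x = 1 -> x != 0.
Proof. move=> hP h1; apply/eqP => x0; move: h1; rewrite x0 Phi0 //. by move/eqP; rewrite eq_sym oner_eq0. Qed.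

Lemma rhoE (R : realType) (n : nat) (Phi : 'rV[R]_n -> R) x :
  rho Phi x = (Phi x)^-1 *: x.
Proof. by rewrite /rho; case: eqP => [->|//]; rewrite scaler0. Qed.

Lemma rho_sph (R : realType) (n : nat) (Phi : 'rV[R]_n -> R) x :
  admissible_Phi Phi -> x != 0 -> Phi (rho Phi x) = 1.
Proof.
move=> hP x0; have p := Phi_gt0 hP x0.
rewrite rhoE PhiZ // ?invr_ge0 ?ltW // mulVf // gt_eqF //.
Qed.

Lemma rhoZ (R : realType) (n : nat) (Phi : 'rV[R]_n -> R) t x :
  admissible_Phi Phi -> 0 < t -> rho Phi (t *: x) = rho Phi x.
Proof.
move=> hP t0; rewrite !rhoE PhiZ ?ltW // scalerA invfM mulrAC mulVf ?gt_eqF //.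
by rewrite mul1r.
Qed.

Lemma rho_id (R : realType) (n : nat) (Phi : 'rV[R]_n -> R) x :
  Phi x = 1 -> rho Phi x = x.
Proof. by move=> h; rewrite rhoE h invr1 scale1r. Qed.

Lemma rho_eq0 (R : realType) (n : nat) (Phi : 'rV[R]_n -> R) x :
  admissible_Phi Phi -> (rho Phi x == 0) = (x == 0).
Proof.
move=> hP; rewrite rhoE scaler_eq0 invr_eq0; case: (eqVneq x 0) => [->|x0]; first by rewrite orbT.
by rewrite orbF gt_eqF // Phi_gt0.
Qed.

Lemma rho_scale (R : realType) (n : nat) (Phi : 'rV[R]_n -> R) x :
  admissible_Phi Phi -> x = Phi x *: rho Phi x.
Proof.
move=> hP; case: (eqVneq x 0) => [->|x0]; first by rewrite rhoE !scaler0.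
by rewrite rhoE scalerA mulfV ?scale1r // gt_eqF // Phi_gt0.
Qed.

Lemma rho_cont (R : realType) (n : nat) (Phi : 'rV[R]_n -> R) x :
  admissible_Phi Phi -> x != 0 -> {for x, continuous (rho Phi)}.
Proof.
move=> hP x0; have [cP _] := hP.
have -> : rho Phi = fun y => (Phi y)^-1 *: y by apply/funext => y; rewrite rhoE.
rewrite /continuous_at.
apply: (@cvgZ _ _ _ _ _ (fun y => (Phi y)^-1) id); [exact: nbhs_filter| |exact: cvg_id].
have H := @cvgV _ _ (nbhs x) _ Phi (Phi x).
apply: H; last exact: cP.
by rewrite gt_eqF // Phi_gt0.
Qed.
Lemma unif (R : realType) n (A : set 'rV[R]_n) (P : R -> 'rV[R]_n -> Prop) :
  compact A ->
  (forall x, A x -> exists2 r, 0 < r &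
     forall y e, ball x r y -> 0 < e -> e <= r -> P e y) ->
  exists2 e, 0 < e & forall x, A x -> P e x.
Proof.
move=> /compact_near_coveringP cA hloc.
have : \forall e \near (0:R)^'+, A `<=` P e.
  apply: cA => x Ax.
  have [r r0 hr] := hloc x Ax.
  exists (ball x r, [set e | 0 < e <= r]); first split => /=.
  - exact: nbhsx_ballx.
  - near=> e; apply/andP; split; [near: e; exact: nbhs_right_gt|near: e; exact: nbhs_right_le].
  - by case=> y e /= [yb /andP[e0 er]]; apply: hr.
move=> H.
have [e [e0 He]] := filter_ex (filterI (nbhs_right_gt (0:R)) H).
by exists e.
Unshelve. all: by end_near.
Qed.
Lemma closed_set1R (R : realType) (x : R) : closed [set x].
Proof. exact: (accessible_closed_set1 (hausdorff_accessible (@Rhausdorff R))). Qed.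

Lemma sph_bound (R : realType) (n : nat) (Phi : 'rV[R]_n -> R) :
  admissible_Phi Phi -> exists2 M, 0 < M & forall x, Phi x = 1 -> `|x| <= M.
Proof.
move=> hP; have [cP _] := hP.
pose U := [set x : 'rV[R]_n | `|x| = 1].
have cU : compact U.
  apply: bounded_closed_compact.
    rewrite /mkset /bounded_near /=; near=> M => x /= ->.
    near: M; apply: nbhs_pinfty_ge; by rewrite num_real.
  have -> : U = (@Num.norm _ _) @^-1` [set 1] by [].
  apply: preimage_closed; last exact: closed_set1R.
  by move=> x _; exact: norm_continuous.
have [x Ux|e e0 He] := @unif _ _ U (fun e y => e <= Phi y) cU.
  have x0 : x != 0 by apply/eqP => x0; move: Ux; rewrite /U /= x0 normr0 => /eqP; rewrite eq_sym oner_eq0.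
  have p := Phi_gt0 hP x0.
  have : \forall y \near x, Phi x / 2 < Phi y.
    have h2 : Phi x / 2 < Phi x by rewrite ltr_pdivrMr // ltr_pMr // ltr1n.
    exact: (cvgr_gt (Phi x) (cP x) _ h2).
  move=> /nbhs_ballP [r r0 hr].
  exists (Num.min r (Phi x / 2)); first by rewrite lt_min r0 divr_gt0.
  move=> y e' yb e'0 e'r; apply: (le_trans e'r); rewrite ge_min; apply/orP; right.
  apply: ltW; apply: hr; apply: le_ball yb; rewrite ge_min lexx //.
exists e^-1; first by rewrite invr_gt0.
move=> x Px; have x0 := sph_neq0 hP Px.
have nx0 : 0 < `|x| by rewrite normr_gt0.
have : 1 = `|x| * Phi (`|x|^-1 *: x).
  by rewrite -PhiZ ?ltW // scalerA mulfV ?gt_eqF // scale1r.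
move=> h1.
have H := He _ (normfZV x0).
rewrite -(ler_pM2l e0) mulfV ?gt_eqF // [in X in _ <= X]h1 [e * _]mulrC ler_pM2l //.
Unshelve. all: by end_near.
Qed.

Lemma sph_compact (R : realType) (n : nat) (Phi : 'rV[R]_n -> R) :
  admissible_Phi Phi -> compact (sph Phi).
Proof.
move=> hP; have [cP _] := hP.
have [M M0 HM] := sph_bound hP.
apply: bounded_closed_compact.
  rewrite /mkset /bounded_near /=; near=> N => x /= /HM xM.
  apply: le_trans xM _; near: N; apply: nbhs_pinfty_ge; by rewrite num_real.
have -> : sph Phi = Phi @^-1` [set 1] by [].
apply: preimage_closed; last exact: closed_set1R.
by move=> x _; exact: cP.
Unshelve. all: by end_near.
Qed.
Lemma ballN (R : realType) n (x y : 'rV[R]_n) r : ball x r y <-> `|x - y| < r.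
Proof. by rewrite -ball_normE. Qed.

Lemma unif_dist (R : realType) n (A B : set 'rV[R]_n) :
  compact A -> closed B -> (forall x, A x -> ~ B (- x)) ->
  exists2 c, 0 < c & forall x k, A x -> B k -> c <= `|x + k|.
Proof.
move=> cA cB hAB.
have [x Ax|c c0 Hc] := @unif _ _ A (fun e y => forall k, B k -> e <= `|y + k|) cA.
  have : nbhs (- x) (~` B).
    by apply: open_nbhs_nbhs; split; [exact: closed_openC|exact: hAB].
  move=> /nbhs_ballP [r0 r00 hr0].
  exists (r0 / 2); first by rewrite divr_gt0.
  move=> y e /ballN yb e0 er k Bk; rewrite leNgt; apply/negP => ke.
  apply: (hr0 k) => //; apply/ballN.
  have -> : - x - k = - ((x - y) + (y + k)) by rewrite addrA subrK opprD.
  rewrite normrN (le_lt_trans (ler_normD _ _)) //.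
  rewrite [r0]splitr ltrD // (lt_le_trans ke er) //.
by exists c => // x k Ax Bk; apply: Hc.
Qed.
Lemma cara_step (R : realType) n N (l : 'I_N.+1 -> R) (s : 'I_N.+1 -> 'rV[R]_n) :
  (n.+1 < N.+1)%N -> (forall i, 0 <= l i) -> \sum_i l i = 1 ->
  exists (l' : 'I_N -> R) (s' : 'I_N -> 'rV[R]_n),
   [/\ forall i, 0 <= l' i, \sum_i l' i = 1, forall i, exists j, s' i = s j &
       \sum_i l' i *: s' i = \sum_i l i *: s i].
Proof.
move=> hN l0 hl1.
pose M : 'M[R]_(N.+1, n + 1) := \matrix_(i, j) row_mx (s i) (1 : 'rV[R]_1) 0 j.
have kM : kermx M != 0.
  rewrite kermx_eq0 /row_free; apply/negP => /eqP h.
  have := rank_leq_col M; rewrite h addn1 => h'.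
  by move: hN; rewrite ltnNge h'.
have [i vi] : exists i, row i (kermx M) != 0.
  apply/not_existsP => h; move: kM; rewrite -[kermx M]subr0; apply/negP; rewrite negbK subr0.
  apply/eqP/row_matrixP => i; rewrite row0; apply/eqP; apply/negP => /negP hi.
  by apply: (h i).
pose v := row i (kermx M).
have hv : v *m M = 0 by rewrite /v -row_mul mulmx_ker row0.
pose a k := v 0 k.
have hcol : forall j, \sum_k a k * M k j = 0.
  by move=> j; have := congr1 (fun A : 'rV_(n + 1) => A 0 j) hv; rewrite !mxE.
have hs : \sum_k a k *: s k = 0.
  apply/rowP => j0; rewrite summxE mxE -[RHS](hcol (lshift 1 j0)).
  by apply: eq_bigr => k _; rewrite [M _ _]mxE row_mxEl mxE.
have ha : \sum_k a k = 0.
  rewrite -[RHS](hcol (rshift n ord0)).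
  by apply: eq_bigr => k _; rewrite [M _ _]mxE row_mxEr mxE mulr1.
have [k0 ak0] : exists k0, 0 < a k0.
  apply/not_existsP => h.
  have hz : forall k, a k = 0.
    move=> k; apply/eqP; rewrite -oppr_eq0; apply/eqP.
    apply: (@psumr_eq0P _ _ xpredT (fun k => - a k)) => //.
      by move=> j _; rewrite oppr_ge0 leNgt; apply/negP => hj; apply: (h j).
    by rewrite sumrN ha oppr0.
  by apply/negP: vi; rewrite negbK; apply/eqP/rowP => j; rewrite [RHS]mxE; exact: hz j.
have [i0 ai0 hmin] := @arg_minP _ R _ k0 (fun k => 0 < a k) (fun k => l k / a k) ak0.
set t := l i0 / a i0.
have t0 : 0 <= t by rewrite divr_ge0 // ltW.
pose lm k := l k - t * a k.
have l1ge0 : forall k, 0 <= lm k.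
  move=> k; rewrite subr_ge0 /lm.
  case: (ltP 0 (a k)) => ak.
    by rewrite -ler_pdivlMr //; exact: hmin.
  by apply: le_trans (l0 k); rewrite mulr_ge0_le0.
have l1i0 : lm i0 = 0 by rewrite /lm /t divfK ?subrr // gt_eqF.
have sl1 : \sum_k lm k = 1 by rewrite /lm sumrB -mulr_sumr ha mulr0 subr0 hl1.
have sl1s : \sum_k lm k *: s k = \sum_k l k *: s k.
  rewrite /lm; under eq_bigr do rewrite scalerBl -scalerA.
  by rewrite sumrB -scaler_sumr hs scaler0 subr0.
exists (fun j => lm (lift i0 j)), (fun j => s (lift i0 j)); split.
- by move=> j; exact: l1ge0.
- by rewrite -sl1 (bigD1_ord i0) //= l1i0 add0r.
- by move=> j; exists (lift i0 j).
- by rewrite -sl1s (bigD1_ord i0) //= l1i0 scale0r add0r.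
Qed.
Definition cc (R : realType) n (S : set 'rV[R]_n) : set 'rV[R]_n :=
  [set x | exists N (l : 'I_N -> R) (s : 'I_N -> 'rV[R]_n),
     [/\ forall i, 0 <= l i, \sum_i l i = 1, forall i, S (s i) &
         x = \sum_i l i *: s i]].

Lemma cc_sub (R : realType) n (S : set 'rV[R]_n) : S `<=` cc S.
Proof.
move=> x Sx; exists 1%N, (fun=> 1), (fun=> x); split => //.
  by rewrite big_ord1.
by rewrite big_ord1 scale1r.
Qed.

Lemma cc_convex (R : realType) n (S : set 'rV[R]_n) : convex (cc S).
Proof.
move=> x y t [N1 [l1 [s1 [l10 l11 Ss1 ->]]]] [N2 [l2 [s2 [l20 l21 Ss2 ->]]]] /andP[t0 t1].
exists (N1 + N2)%N.
exists (fun i => match fintype.split i with inl a => t * l1 a | inr b => (1 - t) * l2 b end).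
exists (fun i => match fintype.split i with inl a => s1 a | inr b => s2 b end).
have sl : forall a : 'I_N1, fintype.split (lshift N2 a) = inl a by move=> a; exact (@unsplitK N1 N2 (inl a)).
have sr : forall b : 'I_N2, fintype.split (rshift N1 b) = inr b by move=> b; exact (@unsplitK N1 N2 (inr b)).
split.
- move=> i; case: (fintype.split i) => a; apply: mulr_ge0 => //; by rewrite subr_ge0.
- rewrite big_split_ord /=.
  under eq_bigr do rewrite sl. under [X in _ + X]eq_bigr do rewrite sr.
  by rewrite -!mulr_sumr l11 l21 !mulr1 addrC subrK.
- by move=> i; case: (fintype.split i).
- rewrite big_split_ord /=.
  by rewrite !scaler_sumr; congr (_ + _); apply: eq_bigr => i _; rewrite ?sl ?sr scalerA.
Qed.

Lemma cara (R : realType) n (S : set 'rV[R]_n) x : cc S x ->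
  exists N (l : 'I_N -> R) (s : 'I_N -> 'rV[R]_n),
     [/\ (N <= n.+1)%N, forall i, 0 <= l i, \sum_i l i = 1, forall i, S (s i) &
         x = \sum_i l i *: s i].
Proof.
case=> N; elim: N x => [|N IH] x [l [s [l0 l1 Ss ->]]].
  by exists 0%N, l, s; split.
case: (leqP N.+1 n.+1) => hN; first by exists N.+1, l, s; split.
have [l' [s' [l'0 l'1 hs' <-]]] := cara_step s hN l0 l1.
apply: (IH (\sum_i l' i *: s' i)); exists l', s'; split => // i.
by have [j ->] := hs' i.
Qed.
Lemma closed_set1V (R : realType) n (x : 'rV[R]_n) : closed [set x].
Proof. exact: (accessible_closed_set1 (hausdorff_accessible (@norm_hausdorff R _))). Qed.

Lemma conv_sub (R : realType) n (S C : set 'rV[R]_n) :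
  convex C -> S `<=` C -> Defs.conv S `<=` C.
Proof. by move=> cC SC x; apply; split. Qed.

Lemma sub_conv (R : realType) n (S : set 'rV[R]_n) : S `<=` Defs.conv S.
Proof. by move=> x Sx C [_ SC]; apply: SC. Qed.

Lemma conv_away (R : realType) n (K S : set 'rV[R]_n) :
  closed K -> convex K -> cone K -> pointed K -> compact S -> S `<=` K ->
  (forall x, S x -> x != 0) ->
  exists2 d, 0 < d & forall x, cl_conv S x -> d <= `|x|.
Proof.
move=> cK vK coK pK cS SK S0.
pose K0 := K `|` [set 0].
have cK0 : closed K0 by apply: closedU => //; exact: closed_set1V.
have hAB : forall x, S x -> ~ K0 (- x).
  move=> x Sx [Kx|/= /eqP]; last by rewrite oppr_eq0; apply/negP; exact: S0.
  have : (K `&` [set - y | y in K]) x by split; [exact: SK|exists (- x); rewrite ?opprK].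
  by rewrite pK => /= /eqP; apply/negP; exact: S0.
have [c c0 Hc] := unif_dist cS cK0 hAB.
have K0add : forall a b, K0 a -> K0 b -> K0 (a + b).
  move=> a b [Ka|/= ->]; last by rewrite add0r.
  move=> [Kb|/= ->]; last by rewrite addr0; left.
  left; have -> : a + b = 2 *: ((1/2) *: a + (1 - 1/2) *: b).
    have h2 : (1 - 1/2 : R) = 1/2 by rewrite {1}(splitr 1) addrK.
    by rewrite h2 -scalerDr scalerA mul1r mulfV ?scale1r // pnatr_eq0.
  apply: coK => //; apply: vK => //.
  by rewrite divr_ge0 //= ler_pdivrMr // mul1r ler1n.
have K0scale : forall t a, 0 <= t -> K0 a -> K0 (t *: a).
  move=> t a; rewrite le_eqVlt => /orP[/eqP <-|t0]; first by rewrite scale0r; right.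
  by case=> [Ka|/= ->]; [left; exact: coK|rewrite scaler0; right].
have K0sum : forall N (P : pred 'I_N) (F : 'I_N -> 'rV[R]_n),
    (forall i, K0 (F i)) -> K0 (\sum_(i | P i) F i).
  move=> N P F hF; apply: (big_ind K0) => //; by right.
pose d := c / (n.+1)%:R.
have hd : 0 < d by rewrite divr_gt0.
have Hcc : forall x, cc S x -> d <= `|x|.
  move=> x /cara [[|N] [l [s [hN l0 l1 Ss ->]]]].
    by move: l1; rewrite big_ord0 => /eqP; rewrite eq_sym oner_eq0.
  have [j _ hmax] := @arg_maxP _ R _ ord0 xpredT l isT.
  set lj := l _ in hmax.
  have hlj : 1 <= lj * (n.+1)%:R.
    rewrite -[X in X <= _]l1; apply: (le_trans (y := \sum_(i < N.+1) lj)).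
      by apply: ler_sum => i _; apply: hmax.
    rewrite sumr_const card_ord -[lj *+ _]mulr_natr.
    apply: ler_wpM2l; last by rewrite ler_nat.
    by apply: le_trans (l0 ord0) (hmax ord0 isT).
  have lj0 : 0 < lj.
    rewrite lt_neqAle (le_trans (l0 ord0) (hmax ord0 isT)) andbT.
    by apply/eqP => h; move: hlj; rewrite -h mul0r ler10.
  rewrite (bigD1 j) //=.
  set rest := \sum_(i | i != j) _.
  have Krest : K0 rest.
    by apply: K0sum => i; apply: K0scale => //; left; apply: SK.
  have -> : l j *: s j + rest = lj *: (s j + lj^-1 *: rest).
    by rewrite scalerDr scalerA mulfV ?scale1r // gt_eqF.
  rewrite normrZ gtr0_norm //.
  apply: (le_trans (y := lj * c)); last first.
    by rewrite ler_pM2l //; apply: Hc; [exact: Ss|apply: K0scale => //; rewrite invr_ge0 ltW].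
  rewrite /d ler_pdivrMr // mulrAC.
  by rewrite -[X in X <= _]mul1r ler_pM2r.
exists d => // x hx.
pose T := [set y : 'rV[R]_n | d <= `|y|].
have cT : closed T.
  have -> : T = (@Num.norm _ _) @^-1` [set r : R | d <= r] by [].
  apply: preimage_closed; last exact: closed_ge.
  by move=> y _; exact: norm_continuous.
have hT : Defs.conv S `<=` T.
  by move=> y /(conv_sub (@cc_convex _ _ S) (@cc_sub _ _ S)) /Hcc.
have := closureS hT; rewrite -(proj1 (closure_id T) cT); apply; exact: hx.
Qed.
Lemma comb_split (R : realType) n (p q : R) (a b : 'rV[R]_n) :
  0 <= p -> 0 <= q -> 0 < p + q ->
  [/\ 0 <= p / (p + q) <= 1 &
      p *: a + q *: b = (p + q) *: ((p / (p + q)) *: a + (1 - p / (p + q)) *: b)].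
Proof.
move=> p0 q0 pq0; split.
  apply/andP; split; first by apply: divr_ge0 => //; exact: ltW.
  by rewrite ler_pdivrMr // mul1r lerDl.
have pq : p + q != 0 by apply: lt0r_neq0.
have h1 : 1 - p / (p + q) = q / (p + q).
  by rewrite -{1}(divff pq) -mulrBl [p + q]addrC addrK.
by rewrite h1 scalerDr !scalerA !(mulrC (p + q)) !divfK.
Qed.

Lemma rho0 (R : realType) n (Phi : 'rV[R]_n -> R) : rho Phi 0 = 0.
Proof. by rewrite /rho eqxx. Qed.

Lemma convex_closure (R : realType) n (A : set 'rV[R]_n) :
  convex A -> convex (closure A).
Proof.
move=> cA x y t cx cy /andP[t0 t1] B /nbhs_ballP [e e0 hB].
have e20 : 0 < e / 2 by rewrite divr_gt0.
have [a [Aa /ballN xa]] := cx _ (nbhsx_ballx x _ e20).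
have [b [Ab /ballN yb]] := cy _ (nbhsx_ballx y _ e20).
exists (t *: a + (1 - t) *: b); split; first by apply: cA => //; rewrite t0 t1.
apply: hB; apply/ballN.
have -> : t *: x + (1 - t) *: y - (t *: a + (1 - t) *: b) =
    t *: (x - a) + (1 - t) *: (y - b).
  by rewrite !scalerBr opprD addrACA.
have t1' : 0 <= 1 - t by rewrite subr_ge0.
apply: (le_lt_trans (ler_normD _ _)).
rewrite !normrZ (ger0_norm t0) (ger0_norm t1').
apply: (le_lt_trans (y := t * (e / 2) + (1 - t) * (e / 2))).
  by apply: lerD; apply: ler_wpM2l => //; apply: ltW.
by rewrite -mulrDl addrC subrK mul1r ltr_pdivrMr // ltr_pMr // ltr1n.
Qed.

Lemma conv_convex (R : realType) n (S : set 'rV[R]_n) : convex (Defs.conv S).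
Proof. by move=> x y l hx hy hl C [cC SC]; exact: (cC _ _ _ (hx C (conj cC SC)) (hy C (conj cC SC)) hl). Qed.
Lemma comb_ne0 (R : realType) n (Phi : 'rV[R]_n -> R) (S : set 'rV[R]_n) x y mu :
  admissible_Phi Phi -> s_convex Phi S -> S x -> S y -> 0 <= mu <= 1 ->
  mu *: x + (1 - mu) *: y != 0.
Proof.
move=> hP [_ [Ssph hc]] Sx Sy hmu; apply/eqP => h.
have := hc x y mu Sx Sy hmu; rewrite h rho0 => /Ssph.
by rewrite /sph /= Phi0 // => /eqP; rewrite eq_sym oner_eq0.
Qed.

Lemma Kchar (R : realType) n (Phi : 'rV[R]_n -> R) (S : set 'rV[R]_n) x :
  admissible_Phi Phi -> S !=set0 -> S `<=` sph Phi ->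
  scale_set [set t : R | 0 <= t] S x <-> x = 0 \/ S (rho Phi x).
Proof.
move=> hP [s0 Ss0] Ssph; split.
  case=> g /= g0 [a Sa <-].
  move: g0; rewrite le_eqVlt => /orP[/eqP <-|g0]; first by left; rewrite scale0r.
  by right; rewrite rhoZ // rho_id //; apply: Ssph.
case=> [->|hx].
  exists 0; first by rewrite /= lexx.
  by exists s0; rewrite // scale0r.
exists (Phi x); first by have [_ [h _]] := hP; apply: h.
by exists (rho Phi x); rewrite // -rho_scale.
Qed.
Lemma i_ii (R : realType) n (Phi : 'rV[R]_n -> R) (S : set 'rV[R]_n) :
  admissible_Phi Phi -> S !=set0 -> S `<=` sph Phi ->
  closed_in_sph Phi S /\ s_convex Phi S ->
  (let K := scale_set [set t : R | 0 <= t] S in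
        pointed K /\ closed K /\ convex K /\ cone K).
Proof.
move=> hP S0 Ssph [[F [cF SF]] sc] K.
have KE : forall x, K x <-> x = 0 \/ S (rho Phi x) by move=> x; exact: Kchar.
have Phige0 : forall x, 0 <= Phi x by have [_ [h _]] := hP.
have [_ [_ hsc]] := sc.
have Kcomb : forall p q a b, 0 <= p -> 0 <= q -> S a -> S b -> K (p *: a + q *: b).
  move=> p q a b p0 q0 Sa Sb; apply/KE.
  have [pq0|pq0] := eqVneq (p + q) 0.
    move/eqP: pq0; rewrite paddr_eq0 // => /andP[/eqP -> /eqP ->].
    by left; rewrite !scale0r addr0.
  have pqp : 0 < p + q by rewrite lt_neqAle eq_sym pq0 addr_ge0.
  have [hmu ->] := comb_split a b p0 q0 pqp.
  by right; rewrite rhoZ //; apply: hsc.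
have Kscale : forall t x, 0 <= t -> K x -> K (t *: x).
  move=> t x t0 [g /= g0 [a Sa <-]]; exists (t * g); first by rewrite /= mulr_ge0.
  by exists a; rewrite // scalerA.
split; [|split; [|split]].
- apply/seteqP; split => x; last first.
    move=> /= ->; split; first by apply/KE; left.
    by exists 0; [apply/KE; left|rewrite oppr0].
  move=> [Kx [y Ky yx]] /=; apply/eqP; apply: contraT => x0.
  have y0 : y != 0 by apply: (contra _ x0) => /eqP y0; rewrite -yx y0 oppr0.
  have [x0'|Sx] := proj1 (KE x) Kx; first by move: x0; rewrite x0' eqxx.
  have [y0'|Sy] := proj1 (KE y) Ky; first by move: y0; rewrite y0' eqxx.
  have px := Phi_gt0 hP x0; have py := Phi_gt0 hP y0.
  have [hmu e] := comb_split (rho Phi x) (rho Phi y) (ltW px) (ltW py) (addr_gt0 px py).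
  have := comb_ne0 hP sc Sx Sy hmu.
  have : (Phi x + Phi y) *: (Phi x / (Phi x + Phi y) *: rho Phi x +
      (1 - Phi x / (Phi x + Phi y)) *: rho Phi y) = 0.
    by rewrite -e -!rho_scale // -yx addNr.
  move/eqP; rewrite scaler_eq0 (gt_eqF (addr_gt0 px py)) /= => /eqP ->.
  by rewrite eqxx.
- move=> x clx; apply/KE.
  have [->|x0] := eqVneq x 0; first by left.
  right; apply: contrapT => nSx.
  have sx : sph Phi (rho Phi x) by exact: rho_sph.
  have nF : ~ F (rho Phi x) by move=> Fx; apply: nSx; rewrite SF.
  have nb : nbhs (rho Phi x) (~` F).
    by apply: open_nbhs_nbhs; split; [exact: closed_openC|exact: nF].
  have nb1 : nbhs x (rho Phi @^-1` (~` F)) by exact: (rho_cont hP x0).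
  have [cP _] := hP.
  have nb2 : \forall y \near x, 0 < Phi y.
    exact: (cvgr_gt (Phi x) (cP x) _ (Phi_gt0 hP x0)).
  have [y [Ky [hy1 hy2]]] := clx _ (filterI nb1 nb2).
  have y0 : y != 0 by apply/eqP => y0; move: hy2; rewrite y0 Phi0 // ltxx.
  have [/eqP|Sy] := proj1 (KE y) Ky; first by rewrite (negbTE y0).
  by apply: hy1; move: Sy; rewrite SF => -[].
- move=> x y l [g /= g0 [a Sa <-]] [h /= h0 [b Sb <-]] /andP[l0 l1].
  rewrite !scalerA; apply: Kcomb => //; first exact: mulr_ge0.
  by apply: mulr_ge0 => //; rewrite subr_ge0.
- by move=> t x t0 Kx; apply: Kscale => //; exact: ltW.
Qed.
Lemma ii_iii (R : realType) n (Phi : 'rV[R]_n -> R) (S : set 'rV[R]_n) :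
  admissible_Phi Phi -> S `<=` sph Phi ->
  (let K := scale_set [set t : R | 0 <= t] S in
        pointed K /\ closed K /\ convex K /\ cone K) ->
  (exists K : set 'rV[R]_n,
          [/\ pointed K, closed K, convex K, cone K & S = K `&` sph Phi]).
Proof.
move=> hP Ssph /= [pK [cK [vK coK]]].
exists (scale_set [set t : R | 0 <= t] S); split => //.
apply/seteqP; split => x.
  move=> Sx; split; last exact: Ssph.
  by exists 1; [rewrite /= ler01|exists x; rewrite ?scale1r].
move=> [[g /= g0 [a Sa <-]]]; rewrite /sph /= PhiZ // (Ssph _ Sa) mulr1 => ->.
by rewrite scale1r.
Qed.

Lemma iii_iv (R : realType) n (Phi : 'rV[R]_n -> R) (S : set 'rV[R]_n) :
  admissible_Phi Phi -> S `<=` sph Phi ->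
  (exists K : set 'rV[R]_n,
          [/\ pointed K, closed K, convex K, cone K & S = K `&` sph Phi]) ->
  S = rho Phi @` cl_conv S.
Proof.
move=> hP Ssph [K [pK cK vK coK SK]].
have cS : compact S.
  rewrite SK setIC; apply: compact_closedI => //; exact: sph_compact.
have SsK : S `<=` K by rewrite SK => x [].
have S0 : forall x, S x -> x != 0 by move=> x /Ssph; exact: sph_neq0.
have [d d0 hd] := conv_away cK vK coK pK cS SsK S0.
apply/seteqP; split => x.
  move=> Sx; exists x; last exact: rho_id (Ssph _ Sx).
  by apply: subset_closure; apply: sub_conv.
case=> w hw <-.
have w0 : w != 0 by rewrite -normr_gt0; apply: lt_le_trans d0 (hd _ hw).
have Kw : K w.
  have h1 : Defs.conv S `<=` K by exact: conv_sub.
  by have := closureS h1; rewrite -(proj1 (closure_id K) cK); apply.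
rewrite SK; split; last exact: rho_sph.
by rewrite rhoE; apply: coK => //; rewrite invr_gt0 Phi_gt0.
Qed.

Lemma iv_v (R : realType) n (Phi : 'rV[R]_n -> R) (S : set 'rV[R]_n) :
  admissible_Phi Phi -> S `<=` sph Phi ->
  S = rho Phi @` cl_conv S ->
  (exists C : set 'rV[R]_n, [/\ compact C, convex C & S = rho Phi @` C]).
Proof.
move=> hP Ssph hS; exists (cl_conv S); split => //; last first.
  by apply: convex_closure; exact: conv_convex.
have [M M0 HM] := sph_bound hP.
pose B := [set x : 'rV[R]_n | `|x| <= M].
have cB : closed B.
  have -> : B = (@Num.norm _ _) @^-1` [set r : R | r <= M] by [].
  apply: preimage_closed; last exact: closed_le.
  by move=> y _; exact: norm_continuous.
have vB : convex B.
  move=> x y l Bx By /andP[l0 l1]; rewrite /B /=.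
  apply: (le_trans (ler_normD _ _)); rewrite !normrZ (ger0_norm l0).
  rewrite ger0_norm ?subr_ge0 //.
  apply: (le_trans (y := l * M + (1 - l) * M)).
    by apply: lerD; apply: ler_wpM2l => //; rewrite subr_ge0.
  by rewrite -mulrDl addrC subrK mul1r.
have hB : cl_conv S `<=` B.
  have h1 : Defs.conv S `<=` B by apply: conv_sub => // x /Ssph /HM.
  by have := closureS h1; rewrite -(proj1 (closure_id B) cB).
apply: bounded_closed_compact; last exact: closed_closure.
rewrite /mkset /bounded_near /=; near=> N => x /hB /= xM.
apply: le_trans xM _; near: N; apply: nbhs_pinfty_ge; by rewrite num_real.
Unshelve. all: by end_near.
Qed.

Lemma v_i (R : realType) n (Phi : 'rV[R]_n -> R) (S : set 'rV[R]_n) :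
  admissible_Phi Phi -> S !=set0 -> S `<=` sph Phi ->
  (exists C : set 'rV[R]_n, [/\ compact C, convex C & S = rho Phi @` C]) ->
  closed_in_sph Phi S /\ s_convex Phi S.
Proof.
move=> hP S0 Ssph [C [cC vC hS]].
have C0 : forall c, C c -> c != 0.
  move=> c Cc; apply/eqP => c0.
  have : S (rho Phi c) by rewrite hS; exists c.
  by rewrite c0 rho0 => /Ssph; rewrite /sph /= Phi0 // => /eqP; rewrite eq_sym oner_eq0.
have cS : compact S.
  rewrite hS; apply: continuous_compact => //.
  apply: continuous_in_subspaceT => c; rewrite inE => Cc.
  exact: rho_cont (C0 _ Cc).
split.
  exists S; split; first exact: (compact_closed (@norm_hausdorff R _)).
  by rewrite setIidr.
split => //; split => // x y l Sx Sy /andP[l0 l1].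
move: Sx Sy; rewrite hS => -[c Cc <-] [d Cd <-].
have pc := Phi_gt0 hP (C0 _ Cc); have pd := Phi_gt0 hP (C0 _ Cd).
rewrite !rhoE !scalerA.
have l1' : 0 <= 1 - l by rewrite subr_ge0.
have a0 : 0 <= l / Phi c by rewrite divr_ge0 // ltW.
have b0 : 0 <= (1 - l) / Phi d by rewrite divr_ge0 // ltW.
have ab0 : 0 < l / Phi c + (1 - l) / Phi d.
  rewrite lt_neqAle addr_ge0 // andbT eq_sym paddr_eq0 // !mulf_eq0 !invr_eq0.
  rewrite !(gt_eqF pc) !(gt_eqF pd) !orbF negb_and subr_eq0.
  by case: (eqVneq l 0) => [->|] //=; rewrite eq_sym oner_eq0.
have [hmu ->] := comb_split c d a0 b0 ab0.
rewrite -rhoE rhoZ //; exists (l / Phi c / (l / Phi c + (1 - l) / Phi d) *: c +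
  (1 - l / Phi c / (l / Phi c + (1 - l) / Phi d)) *: d) => //.
exact: vC.
Qed.
Unset Implicit Arguments.

Theorem corollary1 (R : realType) (n : nat) (Phi : 'rV[R]_n -> R)
    (S : set 'rV[R]_n) :
  (2 <= n)%N -> admissible_Phi Phi -> S !=set0 -> S `<=` sph Phi ->
  [<-> closed_in_sph Phi S /\ s_convex Phi S;
       (let K := scale_set [set t : R | 0 <= t] S in
        pointed K /\ closed K /\ convex K /\ cone K);
       (exists K : set 'rV[R]_n,
          [/\ pointed K, closed K, convex K, cone K & S = K `&` sph Phi]);
       S = rho Phi @` cl_conv S;
       (exists C : set 'rV[R]_n,
          [/\ compact C, convex C & S = rho Phi @` C])].
Proof.
move=> _ hP S0 Ssph.
tfae.
- exact: i_ii.
- exact: ii_iii.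
- exact: iii_iv.
- exact: iv_v.
- exact: v_i.
Qed.
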